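(* Let $l$ and $m$ be positive integers, let $n = 2^m-1$, let $\pi : (\mathbb Z_2^m)^* \to \mathbb Z_{n}$ be a bijection, let $q\equiv 1\pmod{2n}$ be a prime power, let $\rho$ be a primitive element of $\mathbb F_q$, let $\Gamma = \operatorname{Cay}(G_{l,m,q},S(\pi))$ and let $v$ be a vertex of $\Gamma$. Then in the subgraph of $\Gamma$ induced on $\Gamma(v)$, every vertex $v+s$ with $s\in S_0$ has valency $2^m l-2$, and for each $g \in (\mathbb Z_2^m)^*$ every vertex $v+s$ with $s\in S_{g,\pi}$ has valency $$\sum_{\substack{h \in (\mathbb Z_2^m)^* \\ h \ne g}} c^n_q\big(\pi(h-g)-\pi(g),\ \pi(h)-\pi(g)\big).$$
   Context: For an additive group $A$, $A^*=A\setminus\{0\}$. $G_{l,m,q} = \mathbb Z_l \oplus \mathbb Z_2^m \oplus \mathbb F_q$. $S_0 = \{(g,0) : g \in (\mathbb Z_l \oplus \mathbb Z_2^m)^*\}$; $S_{z,\pi} = \{(0,z,\rho^j) : j\in\mathbb Z,\ j \equiv \pi(z) \pmod{n}\}$ for $z\in(\mathbb Z_2^m)^*$; $S(\pi) = S_0 \cup \bigcup_z S_{z,\pi}$. $\operatorname{Cay}(G_{l,m,q},S(\pi))$ has vertex set $G_{l,m,q}$, $x\sim y$ iff $y-x\in S(\pi)$; $\Gamma(v)$ is the set of neighbours of $v$. Cyclotomic classes and numbers: write $q = 2nr+1$; for $i \in \mathbb Z_n$, $C^n_q(i) = \{\rho^{nj+i} : 0\le j\le 2r-1\}$, and for $a,b\in\mathbb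 Z_n$, $c^n_q(a,b) = |(C^n_q(a)+1)\cap C^n_q(b)|$ (arithmetic on indices is in $\mathbb Z_n$). *)

(* Defs.v *)
From HB Require Import structures.
From mathcomp Require Import all_boot all_order all_algebra all_fingroup all_field.
Set Implicit Arguments. Unset Strict Implicit. Unset Printing Implicit Defensive.
Import GRing.Theory.
Local Open Scope ring_scope.

(* Z_k for k >= 1, as integers mod k: ordinals of (k.-1).+1 with Zp ring ops. *)
Notation "''Zm_' k" := 'I_((k.-1).+1) (at level 8, k at level 2, format "''Zm_' k").

Notation Gv l m F := (('Zm_l * 'rV['F_2]_m) * F)%type.

Definition S0 (l m : nat) (F : finFieldType) : {set Gv l m F} :=
  [set x : Gv l m F | (x.2 == 0) && (x.1 != 0)].

(* S_{z,pi} = {(0,z,rho^j) : j integer, j = pi(z) mod n}; since rho^j only depends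
   on j mod (q-1) and n | q-1, j ranges over 0 <= j < q-1. *)
Definition Sz (l m : nat) (F : finFieldType) (n : nat) (rho : F)
  (pi : 'rV['F_2]_m -> 'Zm_n) (z : 'rV['F_2]_m) : {set Gv l m F} :=
  [set x : Gv l m F | [&& x.1.1 == 0, x.1.2 == z &
     [exists j : 'I_(#|F|.-1), (j %% n == pi z)%N && (x.2 == rho ^+ j)]]].

Definition Sconn (l m : nat) (F : finFieldType) (n : nat) (rho : F)
  (pi : 'rV['F_2]_m -> 'Zm_n) : {set Gv l m F} :=
  S0 l m F :|: \bigcup_(z : 'rV['F_2]_m | z != 0) @Sz l m F n rho pi z.

Definition cay_adj (l m : nat) (F : finFieldType) (n : nat) (rho : F)
  (pi : 'rV['F_2]_m -> 'Zm_n) (x y : Gv l m F) : bool :=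
  (y - x) \in @Sconn l m F n rho pi.

Definition nbhd (l m : nat) (F : finFieldType) (n : nat) (rho : F)
  (pi : 'rV['F_2]_m -> 'Zm_n) (v : Gv l m F) : {set Gv l m F} :=
  [set y : Gv l m F | @cay_adj l m F n rho pi v y].

Definition local_valency (l m : nat) (F : finFieldType) (n : nat) (rho : F)
  (pi : 'rV['F_2]_m -> 'Zm_n) (v u : Gv l m F) : nat :=
  #|[set w in @nbhd l m F n rho pi v | @cay_adj l m F n rho pi u w]|.

(* cyclotomic class C^n_q(i) = {rho^(n j + i) : 0 <= j <= 2r-1}, q = 2nr+1 *)
Definition cyc_class (F : finFieldType) (rho : F) (n : nat) (i : nat) : {set F} :=
  let r := ((#|F|.-1) %/ (2 * n))%N in
  [set rho ^+ (n * j + i) | j : 'I_(2 * r)].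

Definition cyc_num (F : finFieldType) (rho : F) (n : nat) (a b : 'Zm_n) : nat :=
  #|[set x + 1 | x in @cyc_class F rho n a] :&: @cyc_class F rho n b|.

(* Main.v *)
Require Import Defs.
From HB Require Import structures.
From mathcomp Require Import all_boot all_order all_algebra all_fingroup all_field.
From mathcomp Require Import zify.
Import GRing.Theory.
Local Open Scope ring_scope.
Set Implicit Arguments. Unset Strict Implicit.

Definition clsZ (F : finFieldType) (n : nat) (rho : F) (k : 'Zm_n) (x : F) : bool :=
  [exists j : 'I_(#|F|.-1), (j %% n == k)%N && (x == rho ^+ j)].

Lemma valZm n (a : 'Zm_n) : (0 < n)%N -> (a %% n = a)%N.
Proof. case: n a => [|n'] a //= _; rewrite modn_small //. Qed.

Lemma valZm_add n (a b : 'Zm_n) : (0 < n)%N -> nat_of_ord (a + b) = ((a + b) %% n)%N.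
Proof. by case: n a b => // n' a b _. Qed.

Lemma rho_neq0 (F : finFieldType) (rho : F) : (#|F|.-1).-primitive_root rho -> rho != 0.
Proof.
move=> pr; apply/eqP=> r0; have := prim_expr_order pr; rewrite r0 expr0n.
have := prim_order_gt0 pr; case: (#|F|.-1) => // k _ /eqP; by rewrite eq_sym oner_eq0.
Qed.

Lemma powers_cover (F : finFieldType) (rho : F) (x : F) :
  (#|F|.-1).-primitive_root rho -> x != 0 -> exists j : 'I_(#|F|.-1), x = rho ^+ j.
Proof.
move=> pr x0.
set P := [set rho ^+ (nat_of_ord j) | j : 'I_(#|F|.-1)].
have cP : #|P| = #|F|.-1.
  rewrite card_imset ?card_ord // => i j /eqP; rewrite (eq_prim_root_expr pr).
  by rewrite !modn_small // => /eqP /ord_inj.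
have sP : P \subset [set~ 0].
  apply/subsetP=> y /imsetP [j _ ->]; rewrite !inE expf_neq0 //; exact: rho_neq0.
have : P == [set~ 0] by rewrite eqEcard sP cardsC1 cP /=; apply: leqnn.
move/eqP=> eP; have : x \in [set~ 0] by rewrite !inE.
rewrite -eP; case/imsetP => j _ ->; by exists j.
Qed.


Lemma cls_neq0 (F : finFieldType) (n : nat) (rho : F) k x : (#|F|.-1).-primitive_root rho ->
  @clsZ F n rho k x -> x != 0.
Proof.
move=> pr /existsP [j /andP [_ /eqP ->]]; rewrite expf_neq0 //; exact: rho_neq0.
Qed.

Lemma cls_uniq (F : finFieldType) (n : nat) (rho : F) a b x : (#|F|.-1).-primitive_root rho ->
  (0 < n)%N -> (n %| #|F|.-1)%N ->
  @clsZ F n rho a x -> @clsZ F n rho b x -> a = b.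
Proof.
move=> pr n0 dv /existsP [j /andP [/eqP ja /eqP ->]] /existsP [j' /andP [/eqP jb /eqP]].
move/eqP; rewrite (eq_prim_root_expr pr) => /eqP e.
apply: val_inj => /=; rewrite -ja -jb.
by rewrite -(modn_dvdm j dv) e (modn_dvdm j' dv).
Qed.

Lemma cls_ex (F : finFieldType) (n : nat) (rho : F) x : (#|F|.-1).-primitive_root rho ->
  (0 < n)%N -> x != 0 -> exists k, @clsZ F n rho k x.
Proof.
move=> pr n0 x0; have [j ->] := @powers_cover F rho x pr x0.
have lt : (j %% n < (n.-1).+1)%N by rewrite prednK // ltn_pmod.
exists (Ordinal lt); apply/existsP; exists j; by apply/andP.
Qed.

Lemma cls_mul (F : finFieldType) (n : nat) (rho : F) a b x y : (#|F|.-1).-primitive_root rho ->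
  (0 < n)%N -> (n %| #|F|.-1)%N ->
  @clsZ F n rho a x -> @clsZ F n rho b y -> @clsZ F n rho (a + b) (x * y).
Proof.
move=> pr n0 dv /existsP [j /andP [/eqP ja /eqP ->]] /existsP [j' /andP [/eqP jb /eqP ->]].
have N0 := prim_order_gt0 pr.
have lt : ((j + j') %% #|F|.-1 < #|F|.-1)%N by rewrite ltn_pmod.
apply/existsP; exists (Ordinal lt) => /=; rewrite -exprD (prim_expr_mod pr) eqxx andbT.
apply/eqP; transitivity ((a + b) %% n)%N; last exact: (esym (@valZm_add n a b n0)).
by rewrite (modn_dvdm _ dv) -ja -jb modnDm.
Qed.

Lemma cls_m1 (F : finFieldType) (n : nat) (rho : F) : (#|F|.-1).-primitive_root rho ->
  (0 < n)%N -> (2 * n %| #|F|.-1)%N -> @clsZ F n rho 0 (-1).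
Proof.
move=> pr n0 /dvdnP [k kN].
have N0 := prim_order_gt0 pr.
have k0 : (0 < k)%N by move: N0; rewrite kN; case: (k).
have lt : (k * n < #|F|.-1)%N. rewrite kN; nia.
apply/existsP; exists (Ordinal lt) => /=; apply/andP; split.
  by rewrite modnMl.
have e2 : (rho ^+ (k * n)) ^+ 2 = 1.
  rewrite -exprM (_ : (k * n * 2 = #|F|.-1)%N) ?prim_expr_order //; rewrite kN; lia.
move: e2 => /eqP; rewrite sqrf_eq1 => /orP [/eqP e1|/eqP ->//]; exfalso.
move: e1 => /eqP; rewrite -[X in _ == X](expr0 rho) (eq_prim_root_expr pr) mod0n modn_small // => /eqP.
nia.
Qed.

Lemma cls_opp (F : finFieldType) (n : nat) (rho : F) a x : (#|F|.-1).-primitive_root rho ->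
  (0 < n)%N -> (2 * n %| #|F|.-1)%N -> @clsZ F n rho a x -> @clsZ F n rho a (- x).
Proof.
move=> pr n0 dv cx.
have dv1 : (n %| #|F|.-1)%N by apply: dvdn_trans dv; apply: dvdn_mull.
by rewrite -mulrN1 -(addr0 a); apply: cls_mul => //; apply: cls_m1.
Qed.

Lemma cyc_classE (F : finFieldType) (n : nat) (rho : F) (c : 'Zm_n) x :
  (#|F|.-1).-primitive_root rho ->
  (0 < n)%N -> (2 * n %| #|F|.-1)%N -> (x \in cyc_class rho n c) = @clsZ F n rho c x.
Proof.
move=> pr n0 dv; rewrite /cyc_class.
set r := (#|F|.-1 %/ (2 * n))%N.
have Nr : #|F|.-1 = (r * (2 * n))%N by rewrite divnK.
have cn : (c < n)%N by rewrite -[X in (X < _)%N](@valZm n c n0) ltn_pmod.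
apply/imsetP/existsP.
  case=> j _ ->.
  have lt : (n * j + c < #|F|.-1)%N.
    have := ltn_ord j; rewrite Nr => jl; nia.
  exists (Ordinal lt) => /=; apply/andP; split => //.
  by rewrite mulnC modnMDl (@valZm n c n0).
case=> j /andP [/eqP jc /eqP ->].
have lt : (j %/ n < 2 * r)%N.
  rewrite ltn_divLR //; have := ltn_ord j; move: (nat_of_ord j) => jj; rewrite Nr; nia.
exists (Ordinal lt) => //=.
by rewrite -jc mulnC -divn_eq.
Qed.

Lemma inSz l m (F : finFieldType) n (rho : F) (pi : 'rV['F_2]_m -> 'Zm_n) z (t : Gv l m F) :
  (t \in @Sz l m F n rho pi z) = [&& t.1.1 == 0, t.1.2 == z & @clsZ F n rho (pi z) t.2].
Proof. by rewrite inE. Qed.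

Lemma inS0 l m (F : finFieldType) (t : Gv l m F) :
  (t \in S0 l m F) = (t.2 == 0) && (t.1 != 0).
Proof. by rewrite inE. Qed.

Lemma inS l m (F : finFieldType) n (rho : F) (pi : 'rV['F_2]_m -> 'Zm_n) (t : Gv l m F) :
  (t \in @Sconn l m F n rho pi) =
  (t \in S0 l m F) || [exists z, (z != 0) && (t \in @Sz l m F n rho pi z)].
Proof.
rewrite /Sconn in_setU; congr orb; apply/bigcupP/existsP.
  by case=> z z0 tz; exists z; rewrite z0.
by case=> z /andP [z0 tz]; exists z.
Qed.

Lemma lv_eq l m (F : finFieldType) n (rho : F) (pi : 'rV['F_2]_m -> 'Zm_n) (v s : Gv l m F) :
  @local_valency l m F n rho pi v (v + s) =
  #|[set t in @Sconn l m F n rho pi | (t - s) \in @Sconn l m F n rho pi]|.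
Proof.
rewrite /local_valency -[RHS](card_imset _ (addrI v)); apply: eq_card => w.
rewrite !inE /cay_adj; apply/idP/imsetP.
  move=> /andP [h1 h2]; exists (w - v); last by rewrite addrC subrK.
  by rewrite in_set h1 /= -addrA -opprD.
case=> t; rewrite in_set => /andP [h1 h2] ->.
by rewrite (addrC v t) addrK h1 -addrA opprD addNKr h2.
Qed.

Lemma pair0E l m (F : finFieldType) (t1 : 'Zm_l) (t2 : 'rV['F_2]_m) (t3 : F) :
  ((((t1, t2), t3) : Gv l m F) == 0) = [&& t1 == 0, t2 == 0 & t3 == 0].
Proof. by rewrite !xpair_eqE andbA. Qed.

Lemma pair0E2 l m (t1 : 'Zm_l) (t2 : 'rV['F_2]_m) :
  (((t1, t2) : 'Zm_l * 'rV['F_2]_m) == 0) = (t1 == 0) && (t2 == 0).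
Proof. by rewrite !xpair_eqE. Qed.

Lemma zero_notin l m (F : finFieldType) n (rho : F) (pi : 'rV['F_2]_m -> 'Zm_n) :
  (#|F|.-1).-primitive_root rho -> (0 : Gv l m F) \notin @Sconn l m F n rho pi.
Proof.
move=> pr; rewrite inS inS0 /= eqxx /= negb_or negbK; apply/andP; split; first by apply/eqP.
apply/existsP => [[z /andP [_]]]; rewrite inSz => /and3P [_ _ /(cls_neq0 pr)]; by rewrite eqxx.
Qed.

Lemma subE l m (F : finFieldType) (t1 s1 : 'Zm_l) (t2 s2 : 'rV['F_2]_m) (t3 s3 : F) :
  (((t1, t2), t3) - ((s1, s2), s3) : Gv l m F) = ((t1 - s1, t2 - s2), t3 - s3).
Proof. by []. Qed.

Lemma subE2 l m (t1 s1 : 'Zm_l) (t2 s2 : 'rV['F_2]_m) :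
  (((t1, t2) - (s1, s2)) : 'Zm_l * 'rV['F_2]_m) = (t1 - s1, t2 - s2).
Proof. by []. Qed.

Lemma cls0 (F : finFieldType) n (rho : F) k : (#|F|.-1).-primitive_root rho ->
  @clsZ F n rho k 0 = false.
Proof. move=> pr; case c: (@clsZ F n rho k 0) => //; have := cls_neq0 pr c; by rewrite eqxx. Qed.

Lemma noSz0 l m (F : finFieldType) n (rho : F) (pi : 'rV['F_2]_m -> 'Zm_n) (a : 'Zm_l * 'rV['F_2]_m) :
  (#|F|.-1).-primitive_root rho ->
  [exists z, (z != 0) && ((a, 0) \in @Sz l m F n rho pi z)] = false.
Proof.
by move=> pr; apply/existsP => [[z /andP [_]]]; rewrite inSz /= cls0 // !andbF.
Qed.

Lemma part1 l m (F : finFieldType) n (rho : F) (pi : 'rV['F_2]_m -> 'Zm_n)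
  (pi_inj : {in [pred z | z != 0] &, injective pi}) (s : Gv l m F) :
  (#|F|.-1).-primitive_root rho -> (0 < n)%N -> (n %| #|F|.-1)%N ->
  s \in S0 l m F ->
  [set t in @Sconn l m F n rho pi | (t - s) \in @Sconn l m F n rho pi] = S0 l m F :\ s.
Proof.
move=> pr n0 dv; move: s => [[s1 s2] s3]; rewrite inS0 /= => /andP [/eqP s30 sn0].
subst s3.
apply/setP => [[[t1 t2] t3]]; rewrite in_setD1 in_set subE !inS !inS0 /= subr0.
case: (eqVneq t3 0) => [->|t30] /=.
  rewrite !noSz0 // !orbF -subE2 subr_eq0 !xpair_eqE eqxx andbT.
  by rewrite andbC.
rewrite andbF; apply/negbTE; apply/negP => /andP [/existsP [z /andP [z0 tz]] /existsP [z' /andP [z0' tz']]].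
move: tz tz'; rewrite !inSz /= => /and3P [/eqP t10 /eqP t2z c] /and3P [/eqP t1s1 /eqP t2s2 c'].
have ez : pi z = pi z' := cls_uniq pr n0 dv c c'.
have {}ez := pi_inj _ _ z0 z0' ez.
move: sn0; rewrite pair0E2.
move: t1s1 t2s2; rewrite t10 t2z ez sub0r => /eqP; rewrite oppr_eq0 => -> /eqP.
by rewrite -{2}(subr0 z') => /eqP /subrI ->; rewrite !eqxx.
Qed.

Lemma card_S0 l m (F : finFieldType) : (0 < l)%N -> #|S0 l m F| = (2 ^ m * l - 1)%N.
Proof.
move=> l0.
have -> : S0 l m F = (fun a => (a, 0)) @: [set~ (0 : 'Zm_l * 'rV['F_2]_m)].
  apply/setP => [[a b]]; rewrite inS0 /=; apply/idP/imsetP.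
    case/andP => /eqP -> /eqP a0; exists a => //; rewrite !inE; apply/eqP => e; apply: a0; rewrite e; reflexivity.
  case=> a'; rewrite in_setC1 => a0 [-> ->]; apply/andP; split; [exact/eqP | exact: a0].
have inj : injective (fun a : 'Zm_l * 'rV['F_2]_m => ((a, 0) : Gv l m F)) by move=> x y [].
rewrite (card_imset _ inj).
rewrite cardsC1 card_prod card_mx card_Fp // card_ord prednK // mul1n subn1 mulnC.
by [].
Qed.

Lemma char2 m (g : 'rV['F_2]_m) : g + g = 0.
Proof. apply/matrixP => i j; rewrite !mxE. apply: addrr_pchar2. exact: pchar_Fp. Qed.

Lemma part2A l m (F : finFieldType) n (rho : F) (pi : 'rV['F_2]_m -> 'Zm_n)
  (pi_inj : {in [pred z | z != 0] &, injective pi}) (g : 'rV['F_2]_m) (s3 : F) :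
  (#|F|.-1).-primitive_root rho -> (0 < n)%N -> (2 * n %| #|F|.-1)%N ->
  g != 0 -> @clsZ F n rho (pi g) s3 ->
  [set t in @Sconn l m F n rho pi | (t - ((0, g), s3)) \in @Sconn l m F n rho pi] =
  (fun p : 'rV['F_2]_m * F => (((0, p.1), p.2) : Gv l m F)) @:
    [set p | [&& p.1 != 0, p.1 != g, @clsZ F n rho (pi p.1) p.2 &
                @clsZ F n rho (pi (p.1 - g)) (p.2 - s3)]].
Proof.
move=> pr n0 dv2 g0 cs.
have dv : (n %| #|F|.-1)%N by apply: dvdn_trans dv2; apply: dvdn_mull.
have s30 : s3 != 0 := cls_neq0 pr cs.
apply/setP => [[[t1 t2] t3]]; rewrite in_set subE !inS !inS0 /=; apply/idP/imsetP.
  case/andP => tS tsS.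
  case/orP: tS => [/andP [/eqP t30 tn0] | /existsP [h /andP [h0 th]]].
    subst t3; rewrite sub0r in tsS; exfalso.
    case/orP: tsS => [/andP [/eqP e _] | /existsP [z /andP [z0 tz]]].
      by move/eqP: e; rewrite oppr_eq0 (negbTE s30).
    move: tz; rewrite inSz /= => /and3P [/eqP t10 /eqP t2z cz].
    have cz' := cls_opp pr n0 dv2 cz; rewrite opprK in cz'.
    have ez := pi_inj _ _ z0 g0 (cls_uniq pr n0 dv cz' cs).
    move: tn0; rewrite pair0E2; move: t10; rewrite subr0 => ->.
    have -> : t2 = 0 by rewrite -(subrK g t2) t2z ez char2.
    by rewrite !eqxx.
  move: th; rewrite inSz /= => /and3P [/eqP t10 /eqP t2h ch].
  subst t1 t2.
  case/orP: tsS => [/andP [/eqP e en0] | /existsP [z /andP [z0 tz]]].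
    exfalso; move/eqP: e; rewrite subr_eq0 => /eqP e; subst t3.
    have ez := pi_inj _ _ h0 g0 (cls_uniq pr n0 dv ch cs); subst h.
    by move: en0; rewrite pair0E2 !subrr !eqxx.
  move: tz; rewrite inSz /= => /and3P [_ /eqP hz cz].
  exists (h, t3) => //; rewrite inE /= h0 ch hz cz andbT /=.
  rewrite andbT; apply: contra z0 => /eqP e; by rewrite -hz e subrr.
case=> [[h f]]; rewrite inE /= => /and4P [h0 hg ch chg] [-> -> ->].
apply/andP; split; apply/orP; right; apply/existsP.
  by exists h; rewrite h0 inSz /= !eqxx ch.
exists (h - g); rewrite subr_eq0 hg inSz /= subrr !eqxx chg //.
Qed.

Lemma cls_div (F : finFieldType) n (rho : F) c d y s3 :
  (#|F|.-1).-primitive_root rho -> (0 < n)%N -> (n %| #|F|.-1)%N ->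
  @clsZ F n rho c (y * s3) -> @clsZ F n rho d s3 -> y != 0 -> @clsZ F n rho (c - d) y.
Proof.
move=> pr n0 dv cy cs y0; have [k ck] := @cls_ex F n rho y pr n0 y0.
have e := cls_uniq pr n0 dv (cls_mul pr n0 dv ck cs) cy.
by rewrite -e addrK.
Qed.

Lemma part2C (F : finFieldType) n (rho : F) m (pi : 'rV['F_2]_m -> 'Zm_n) g h s3 :
  (#|F|.-1).-primitive_root rho -> (0 < n)%N -> (2 * n %| #|F|.-1)%N ->
  @clsZ F n rho (pi g) s3 ->
  #|[set f | @clsZ F n rho (pi h) f && @clsZ F n rho (pi (h - g)) (f - s3)]| =
  @cyc_num F rho n (pi (h - g) - pi g) (pi h - pi g).
Proof.
move=> pr n0 dv2 cs.
have dv : (n %| #|F|.-1)%N by apply: dvdn_trans dv2; apply: dvdn_mull.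
have s30 : s3 != 0 := cls_neq0 pr cs.
rewrite /cyc_num -[RHS](card_imset _ (mulIf s30)); apply: eq_card => f.
apply/idP/imsetP.
  rewrite inE => /andP [ch chg]; exists (f / s3); last by rewrite divfK.
  have f0 : f / s3 != 0 by rewrite mulf_neq0 ?invr_eq0 // (cls_neq0 pr ch).
  have c1 : @clsZ F n rho (pi h - pi g) (f / s3).
    by apply: (cls_div pr n0 dv _ cs f0); rewrite divfK.
  rewrite in_setI [f / s3 \in cyc_class _ _ _]cyc_classE // c1 andbT.
  have e : (f / s3 - 1) * s3 = f - s3 by rewrite mulrBl divfK // mul1r.
  have x0 : f / s3 - 1 != 0.
    by apply: contraNneq (cls_neq0 pr chg) => e0; rewrite -e e0 mul0r.
  apply/imsetP; exists (f / s3 - 1); last by rewrite subrK.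
  by rewrite cyc_classE //; apply: (cls_div pr n0 dv _ cs x0); rewrite e.
case=> y; rewrite in_setI => /andP [/imsetP [x cx ->] cy] ->.
rewrite cyc_classE // in cx; rewrite cyc_classE // in cy.
rewrite inE; apply/andP; split.
  by rewrite -(subrK (pi g) (pi h)); apply: cls_mul.
rewrite mulrDl mul1r addrK -(subrK (pi g) (pi (h - g))); exact: cls_mul.
Qed.

Lemma part2B (F : finFieldType) n (rho : F) m (pi : 'rV['F_2]_m -> 'Zm_n) g s3 :
  #|[set p : 'rV['F_2]_m * F | [&& p.1 != 0, p.1 != g, @clsZ F n rho (pi p.1) p.2 &
                @clsZ F n rho (pi (p.1 - g)) (p.2 - s3)]]| =
  (\sum_(h : 'rV['F_2]_m | (h != 0%R) && (h != g))
     #|[set f | @clsZ F n rho (pi h) f && @clsZ F n rho (pi (h - g)%R) (f - s3)%R]|)%N.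
Proof.
under eq_bigr => h _ do rewrite -sum1_card.
rewrite pair_big_dep /= -sum1_card; apply: eq_bigl => p.
by rewrite !inE !andbA.
Qed.

Unset Implicit Arguments. Set Strict Implicit.

Theorem lemma2p3 (l m : nat) (hl : (0 < l)%N) (hm : (0 < m)%N)
  (pi : 'rV['F_2]_m -> 'Zm_(2 ^ m - 1))
  (pi_inj : {in [pred z | z != 0] &, injective pi})
  (pi_surj : forall k : 'Zm_(2 ^ m - 1), exists2 z, z != 0 & pi z = k)
  (q : nat) (F : finFieldType) (hF : #|F| = q)
  (hq : q = 1 %[mod 2 * (2 ^ m - 1)])
  (rho : F) (hrho : (q.-1).-primitive_root rho)
  (v : Gv l m F) :
  (forall s, s \in S0 l m F ->
     @local_valency l m F (2 ^ m - 1) rho pi v (v + s) = (2 ^ m * l - 2)%N) /\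
  (forall g : 'rV['F_2]_m, g != 0 -> forall s, s \in @Sz l m F (2 ^ m - 1) rho pi g ->
     @local_valency l m F (2 ^ m - 1) rho pi v (v + s) =
     (\sum_(h : 'rV['F_2]_m | (h != 0%R) && (h != g))
        @cyc_num F rho (2 ^ m - 1) ((pi (h - g) - pi g)%R) ((pi h - pi g)%R))%N).
Proof.
subst q.
have n0 : (0 < 2 ^ m - 1)%N.
  by rewrite subn_gt0 -{1}(expn0 2) ltn_exp2l.
have F0 : (0 < #|F|)%N by apply/card_gt0P; exists 0.
have dv2 : (2 * (2 ^ m - 1) %| #|F|.-1)%N.
  by rewrite -subn1 -eqn_mod_dvd // hq.
have dv : ((2 ^ m - 1) %| #|F|.-1)%N by apply: dvdn_trans dv2; apply: dvdn_mull.
split.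
  move=> s sS; rewrite lv_eq (part1 pi_inj hrho n0 dv sS).
  have := cardsD1 s (S0 l m F); rewrite sS card_S0 //.
  have : (2 <= 2 ^ m)%N by rewrite -{1}(expn1 2) leq_exp2l.
  move: (2 ^ m)%N => M h1 /= h2.
  have ml : (1 < M * l)%N by apply: (leq_trans h1); rewrite leq_pmulr.
  move: h2 ml; move: (M * l)%N #|_| => A B; lia.
move=> g g0 [[s1 s2] s3]; rewrite inSz /= => /and3P [/eqP -> /eqP -> cs].
rewrite lv_eq (part2A l pi_inj hrho n0 dv2 g0 cs) card_imset; last first.
  by move=> [a b] [c d] /= [-> ->].
rewrite part2B; apply: eq_bigr => h _; exact: part2C.
Qed.
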